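(* Consider the class $\mathcal{C}$ of third order ordinary differential equations of the form $$y'''=\frac{-3X(x,y)\,(y'')^2+P(x,y)\,y''\,(y')^2+Q(x,y)\,y''\,y'+R(x,y)\,y''+S(x,y)\,(y')^5+L(x,y)\,(y')^4+K(x,y)\,(y')^3+M(x,y)\,(y')^2+N(x,y)\,y'+T(x,y)}{Y(x,y)-X(x,y)\,y'},$$ where $X,Y,P,Q,R,S,L,K,M,N,T$ are arbitrary functions of $(x,y)$ (note that the coefficient of $(y'')^2$ in the numerator is exactly $-3$ times the function $X$ appearing in the denominator). Then $\mathcal{C}$ is invariant under point transformations: for every non-degenerate point change of variables $\tilde x=\tilde x(x,y)$, $\tilde y=\tilde y(x,y)$, every equation of $\mathcal{C}$ is transformed into an equation $\tilde y'''=g(\tilde x,\tilde y,\tilde y',\tilde y'')$ which is again of the same form (with $x,y$ replaced by $\tilde x,\tilde y$, and with some new coefficient functions $\tilde X,\tilde Y,\tilde P,\dots,\tilde T$ of $(\tilde x,\tilde y)$).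
   Context: A point transformation is a change of variables $\tilde x=\tilde x(x,y)$, $\tilde y=\tilde y(x,y)$ on the plane, assumed non-degenerate, i.e. with nonzero Jacobian determinant; derivatives $y',y'',y'''$ transform accordingly by the chain rule when $y$ is regarded as a function of $x$ and $\tilde y$ as a function of $\tilde x$. A class of equations $y'''=f(x,y,y',y'')$ with $f$ in a prescribed set of functions $\mathcal F$ is called point-invariant if, for every $f\in\mathcal F$ and every non-degenerate point transformation, the transformed equation $\tilde y'''=g(\tilde x,\tilde y,\tilde y',\tilde y'')$ has $g\in\mathcal F$. *)

(* Defs.v *)
From Stdlib Require Import Reals List.
From Coquelicot Require Import Coquelicot.
Open Scope R_scope.

Definition dx (F : R -> R -> R) : R -> R -> R :=
  fun x y => Derive (fun t => F t y) x.
Definition dy (F : R -> R -> R) : R -> R -> R :=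
  fun x y => Derive (fun t => F x t) y.

(* Iterated partial derivative: true = d/dx, false = d/dy. *)
Fixpoint iter_partial (ds : list bool) (F : R -> R -> R) : R -> R -> R :=
  match ds with
  | nil => F
  | d :: ds' => (if d then dx else dy) (iter_partial ds' F)
  end.

Definition smooth2 (F : R -> R -> R) : Prop :=
  forall (ds : list bool) (x y : R),
    ex_derive (fun t => iter_partial ds F t y) x /\
    ex_derive (fun t => iter_partial ds F x t) y /\
    continuous (fun z : R * R => iter_partial ds F (fst z) (snd z)) (x, y).

Definition jacobian (F G : R -> R -> R) (x y : R) : R :=
  dx F x y * dy G x y - dy F x y * dx G x y.

Definition point_transformation (F G : R -> R -> R) : Prop :=
  smooth2 F /\ smooth2 G /\
  (forall x y, jacobian F G x y <> 0) /\
  (forall x1 y1 x2 y2, F x1 y1 = F x2 y2 -> G x1 y1 = G x2 y2 ->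
                       x1 = x2 /\ y1 = y2).

(* Functions on the jet space, of (x, y, p, q) = (x, y, y', y''). *)
Definition jfun := R -> R -> R -> R -> R.

(* Total derivative d/dx along solutions of y''' = f x y y' y'':
   D h = h_x + y' h_y + y'' h_{y'} + f h_{y''}. *)
Definition Dtot (f : jfun) (h : jfun) : jfun :=
  fun x y p q =>
    Derive (fun t => h t y p q) x + p * Derive (fun t => h x t p q) y
    + q * Derive (fun t => h x y t q) p + f x y p q * Derive (fun t => h x y p t) q.

Definition lift (F : R -> R -> R) : jfun := fun x y _ _ => F x y.

(* d xtilde / dx *)
Definition lam (F : R -> R -> R) (f : jfun) : jfun := Dtot f (lift F).

(* Transformed derivatives by the chain rule: d/dxtilde = (1/lam) d/dx. *)
Definition p_tilde (F G : R -> R -> R) (f : jfun) : jfun :=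
  fun x y p q => Dtot f (lift G) x y p q / lam F f x y p q.
Definition q_tilde (F G : R -> R -> R) (f : jfun) : jfun :=
  fun x y p q => Dtot f (p_tilde F G f) x y p q / lam F f x y p q.
Definition r_tilde (F G : R -> R -> R) (f : jfun) : jfun :=
  fun x y p q => Dtot f (q_tilde F G f) x y p q / lam F f x y p q.

Record coeffs := Coeffs {
  cX : R -> R -> R; cY : R -> R -> R; cP : R -> R -> R; cQ : R -> R -> R;
  cR : R -> R -> R; cS : R -> R -> R; cL : R -> R -> R; cK : R -> R -> R;
  cM : R -> R -> R; cN : R -> R -> R; cT : R -> R -> R }.

Definition class_den (c : coeffs) (x y p : R) : R := cY c x y - cX c x y * p.

Definition class_num (c : coeffs) (x y p q : R) : R :=
  -3 * cX c x y * q ^ 2 + cP c x y * q * p ^ 2 + cQ c x y * q * p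
  + cR c x y * q + cS c x y * p ^ 5 + cL c x y * p ^ 4 + cK c x y * p ^ 3
  + cM c x y * p ^ 2 + cN c x y * p + cT c x y.

Definition class_rhs (c : coeffs) : jfun :=
  fun x y p q => class_num c x y p q / class_den c x y p.

(* Main.v *)
Require Import Defs.
From Stdlib Require Import Reals Lra FunctionalExtensionality ClassicalEpsilon.
From Coquelicot Require Import Coquelicot.
From Stdlib Require Import List.
Import ListNotations.
Open Scope R_scope.
Record pt := MkPt {
  Fx : R; Fy : R; Gx : R; Gy : R;
  Fxx : R; Fxy : R; Fyx : R; Fyy : R; Gxx : R; Gxy : R; Gyx : R; Gyy : R;
  Fxxx : R; Fyxx : R; Fxxy : R; Fyxy : R; Fxyx : R; Fyyx : R; Fxyy : R; Fyyy : R;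
  Gxxx : R; Gyxx : R; Gxxy : R; Gyxy : R; Gxyx : R; Gyyx : R; Gxyy : R; Gyyy : R;
  zX : R; zY : R; zP : R; zQ : R; zR : R; zS : R; zL : R; zK : R; zM : R; zN : R; zT : R }.

Section S.
Variable z : pt.
Definition Jc := Fx z * Gy z - Fy z * Gx z.
Definition lamp p := Fx z + p * Fy z.
Definition mup p := Gx z + p * Gy z.
Definition lam2 p := Fxx z + p * (Fxy z + Fyx z) + p^2 * Fyy z.
Definition mu2 p := Gxx z + p * (Gxy z + Gyx z) + p^2 * Gyy z.
Definition Phi p := mu2 p * lamp p - mup p * lam2 p.
Definition dPhi p := (Gxy z + Gyx z + 2 * p * Gyy z) * lamp p + mu2 p * Fy z
   - Gy z * lam2 p - mup p * (Fxy z + Fyx z + 2 * p * Fyy z).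
Definition Jx := Fxx z * Gy z + Fx z * Gxy z - Fxy z * Gx z - Fy z * Gxx z.
Definition Jy := Fyx z * Gy z + Fx z * Gyy z - Fyy z * Gx z - Fy z * Gyx z.
Definition Phix p :=
  (Gxxx z + p * (Gxxy z + Gxyx z) + p^2 * Gxyy z) * lamp p
  + mu2 p * (Fxx z + p * Fxy z)
  - (Gxx z + p * Gxy z) * lam2 p
  - mup p * (Fxxx z + p * (Fxxy z + Fxyx z) + p^2 * Fxyy z).
Definition Phiy p :=
  (Gyxx z + p * (Gyxy z + Gyyx z) + p^2 * Gyyy z) * lamp p
  + mu2 p * (Fyx z + p * Fyy z)
  - (Gyx z + p * Gyy z) * lam2 p
  - mup p * (Fyxx z + p * (Fyxy z + Fyyx z) + p^2 * Fyyy z).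
Definition Psi p := Phix p + p * Phiy p.
Definition Xt := (Fx z * zX z + Fy z * zY z) / Jc.
Definition Yt := (Gx z * zX z + Gy z * zY z) / Jc.
Definition den p := zY z - zX z * p.
Definition quint p := zS z * p^5 + zL z * p^4 + zK z * p^3 + zM z * p^2 + zN z * p + zT z.
Definition num p q := -3 * zX z * q^2 + zP z * q * p^2 + zQ z * q * p + zR z * q + quint p.
Definition Zf p := Xt * mu2 p - Yt * lam2 p.
Definition Af p := (Jx + p * Jy) * den p + Jc * (zP z * p^2 + zQ z * p + zR z)
   + dPhi p * den p + 3 * zX z * Phi p + 3 * Jc * Zf p.
Definition Bf p := Jc * quint p + Psi p * den p + 3 * Phi p * Zf p.
Definition al0 := Af 0.
Definition al2 := (Af 2 - 2 * Af 1 + Af 0) / 2.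
Definition al1 := (4 * Af 1 - Af 2 - 3 * Af 0) / 2.

Lemma A_quad p : Jc <> 0 -> Af p = al0 + al1 * p + al2 * p^2.
Proof. intro HJ. unfold al0, al1, al2, Af, Zf, Xt, Yt, dPhi, Phi, den, mu2, lam2, mup, lamp. field. exact HJ. Qed.
End S.

Definition ic0 (g : R -> R) := g 0.
Definition ic1 (g : R -> R) := -137/60 * g 0 + 5 * g 1 - 5 * g 2 + 10/3 * g 3 - 5/4 * g 4 + 1/5 * g 5.
Definition ic2 (g : R -> R) := 15/8 * g 0 - 77/12 * g 1 + 107/12 * g 2 - 13/2 * g 3 + 61/24 * g 4 - 5/12 * g 5.
Definition ic3 (g : R -> R) := -17/24 * g 0 + 71/24 * g 1 - 59/12 * g 2 + 49/12 * g 3 - 41/24 * g 4 + 7/24 * g 5.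
Definition ic4 (g : R -> R) := 1/8 * g 0 - 7/12 * g 1 + 13/12 * g 2 - g 3 + 11/24 * g 4 - 1/12 * g 5.
Definition ic5 (g : R -> R) := -1/120 * g 0 + 1/24 * g 1 - 1/12 * g 2 + 1/12 * g 3 - 1/24 * g 4 + 1/120 * g 5.
Definition ipoly (g : R -> R) p :=
  ic0 g + ic1 g * p + ic2 g * p^2 + ic3 g * p^3 + ic4 g * p^4 + ic5 g * p^5.

Section T.
Variable z : pt.
Definition Quad p := (al0 z + al1 z * p + al2 z * p^2) / Jc z.
Definition Bp p := Bf z p - Quad p * Phi z p.
Definition hs s := (ic0 Bp * (Gy z - Fy z * s)^5
  + ic1 Bp * (Fx z * s - Gx z) * (Gy z - Fy z * s)^4
  + ic2 Bp * (Fx z * s - Gx z)^2 * (Gy z - Fy z * s)^3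
  + ic3 Bp * (Fx z * s - Gx z)^3 * (Gy z - Fy z * s)^2
  + ic4 Bp * (Fx z * s - Gx z)^4 * (Gy z - Fy z * s)
  + ic5 Bp * (Fx z * s - Gx z)^5) / Jc z ^ 5.
Lemma Bp_interp p : Jc z <> 0 -> Bp p = ipoly Bp p.
Proof. intro HJ.
  unfold ipoly, ic0, ic1, ic2, ic3, ic4, ic5.
  unfold Bp, Quad, Bf, Zf, Xt, Yt, Psi, Phix, Phiy, Phi, den, quint, mu2, lam2, mup, lamp.
  field. exact HJ.
Qed.
End T.

Section U.
Variable z : pt.
Definition Pt := (al0 z * Fy z ^ 2 - al1 z * Fx z * Fy z + al2 z * Fx z ^ 2) / Jc z ^ 3.
Definition Qt := (- 2 * al0 z * Fy z * Gy z + al1 z * (Fx z * Gy z + Fy z * Gx z) - 2 * al2 z * Fx z * Gx z) / Jc z ^ 3.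
Definition Rt := (al0 z * Gy z ^ 2 - al1 z * Gx z * Gy z + al2 z * Gx z ^ 2) / Jc z ^ 3.
Definition newnum s t := -3 * Xt z * t^2 + Pt * t * s^2 + Qt * t * s + Rt * t
  + ic5 (hs z) * s^5 + ic4 (hs z) * s^4 + ic3 (hs z) * s^3 + ic2 (hs z) * s^2 + ic1 (hs z) * s + ic0 (hs z).
Definition newden s := Yt z - Xt z * s.

Lemma hs_interp s : Jc z <> 0 -> hs z s = ipoly (hs z) s.
Proof. intro HJ. unfold ipoly, ic0, ic1, ic2, ic3, ic4, ic5, hs.
  generalize (ic0 (Bp z)) (ic1 (Bp z)) (ic2 (Bp z)) (ic3 (Bp z)) (ic4 (Bp z)) (ic5 (Bp z)). intros.
  field. exact HJ. Qed.

Lemma core p q : Jc z <> 0 -> lamp z p <> 0 -> den z p <> 0 ->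
  let s := mup z p / lamp z p in let t := (Jc z * q + Phi z p) / lamp z p ^ 3 in
  newden s <> 0 /\
  ((((Jx z + p * Jy z) * q + Psi z p + q * dPhi z p) * lamp z p
     - 3 * (Jc z * q + Phi z p) * (lam2 z p + q * Fy z)) / lamp z p ^ 4
    + num z p q / den z p * Jc z / lamp z p ^ 3) / lamp z p
  = newnum s t / newden s.
Proof.
  intros HJ Hl Hd s t.
  assert (E1 : newden s = den z p / lamp z p).
  { unfold newden, s, Xt, Yt, den, mup, lamp in *. unfold Jc in HJ |- *. field. split; assumption. }
  split. { rewrite E1. unfold Rdiv. apply Rmult_integral_contrapositive_currified; auto with real. }
  assert (E2 : Pt * s^2 + Qt * s + Rt = Quad z p / lamp z p ^ 2).
  { unfold Pt, Qt, Rt, Quad, s, mup. unfold lamp in *. unfold Jc in *. field. split; assumption. }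
  assert (E3 : hs z s = Bp z p / lamp z p ^ 5).
  { rewrite (Bp_interp z p HJ). unfold hs, ipoly, s, mup.
    generalize (ic0 (Bp z)) (ic1 (Bp z)) (ic2 (Bp z)) (ic3 (Bp z)) (ic4 (Bp z)) (ic5 (Bp z)). intros.
    unfold lamp in *. unfold Jc in *. field. split; assumption. }
  assert (E4 : newnum s t = -3 * Xt z * t^2 + (Pt * s^2 + Qt * s + Rt) * t + hs z s).
  { rewrite (hs_interp s HJ). unfold newnum, ipoly. ring. }
  rewrite E4, E2, E3, E1.
  assert (E5 : Quad z p = Af z p / Jc z).
  { unfold Quad. rewrite (A_quad z p HJ). reflexivity. }
  unfold Bp. rewrite E5. unfold t.
  unfold Af, Bf, Zf, Xt, Yt, num, quint, Psi, dPhi, Phi, den, mu2, lam2, mup.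
  unfold lamp in *. unfold Jc in *. unfold den in Hd. field. repeat split; assumption.
Qed.
End U.
Definition QTe (a b c d a1 b1 a2 b2 c1 d1 c2 d2 p q : R) : R :=
  ((a * d - b * c) * q + ((c1 + p * (d1 + c2) + p^2 * d2) * (a + p * b)
     - (c + p * d) * (a1 + p * (b1 + a2) + p^2 * b2))) / (a + p * b)^3.

Ltac der_rw H :=
  match type of H with is_derive ?f ?x ?v =>
    let E := fresh in
    assert (E : Derive (fun t => f t) x = v) by (apply is_derive_unique; exact H);
    rewrite E; clear E end.

Lemma Dlem (fa fb fc fd fa1 fb1 fa2 fb2 fc1 fd1 fc2 fd2 : R -> R)
  (va vb vc vd va1 vb1 va2 vb2 vc1 vd1 vc2 vd2 x p q : R) :
  is_derive fa x va -> is_derive fb x vb -> is_derive fc x vc -> is_derive fd x vd ->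
  is_derive fa1 x va1 -> is_derive fb1 x vb1 -> is_derive fa2 x va2 -> is_derive fb2 x vb2 ->
  is_derive fc1 x vc1 -> is_derive fd1 x vd1 -> is_derive fc2 x vc2 -> is_derive fd2 x vd2 ->
  fa x + p * fb x <> 0 ->
  let a := fa x in let b := fb x in let c := fc x in let d := fd x in
  let a1 := fa1 x in let b1 := fb1 x in let a2 := fa2 x in let b2 := fb2 x in
  let c1 := fc1 x in let d1 := fd1 x in let c2 := fc2 x in let d2 := fd2 x in
  is_derive (fun t => QTe (fa t) (fb t) (fc t) (fd t) (fa1 t) (fb1 t) (fa2 t) (fb2 t)
                         (fc1 t) (fd1 t) (fc2 t) (fd2 t) p q) x
   ((((va * d + a * vd - vb * c - b * vc) * q
      + ((vc1 + p * (vd1 + vc2) + p^2 * vd2) * (a + p * b)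
         + (c1 + p * (d1 + c2) + p^2 * d2) * (va + p * vb)
         - (vc + p * vd) * (a1 + p * (b1 + a2) + p^2 * b2)
         - (c + p * d) * (va1 + p * (vb1 + va2) + p^2 * vb2))) * (a + p * b)
     - 3 * ((a * d - b * c) * q + ((c1 + p * (d1 + c2) + p^2 * d2) * (a + p * b)
            - (c + p * d) * (a1 + p * (b1 + a2) + p^2 * b2))) * (va + p * vb))
    / (a + p * b)^4).
Proof.
  intros Ha Hb Hc Hd Ha1 Hb1 Ha2 Hb2 Hc1 Hd1 Hc2 Hd2 Hl.
  intros. unfold QTe. auto_derive.
  - repeat split; try (eexists; eassumption).
    intro H0. apply Hl. clear -H0. 
    repeat match goal with H : _ * _ = 0 |- _ => apply Rmult_integral in H; destruct H end;
    try assumption; lra.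
  - der_rw Ha. der_rw Hb. der_rw Hc. der_rw Hd. der_rw Ha1. der_rw Hb1. der_rw Ha2. der_rw Hb2.
    der_rw Hc1. der_rw Hd1. der_rw Hc2. der_rw Hd2.
    unfold a, b, c, d, a1, b1, a2, b2, c1, d1, c2, d2. field. exact Hl.
Qed.
Lemma loc_nz (g : R -> R) x : continuous g x -> g x <> 0 -> locally x (fun t => g t <> 0).
Proof.
  intros Hc H0.
  assert (Hp : 0 < Rabs (g x)) by (apply Rabs_pos_lt; exact H0).
  apply (Hc (fun u => u <> 0)).
  exists (mkposreal _ Hp). intros u Hu Hu0. subst u.
  unfold ball in Hu; simpl in Hu. unfold AbsRing_ball, abs, minus, plus, opp in Hu; simpl in Hu.
  rewrite Rplus_0_l, Rabs_Ropp in Hu. lra.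
Qed.

Ltac der_rw2 H :=
  match type of H with is_derive ?f ?x ?v =>
    let E := fresh in
    assert (E : Derive (fun t : R => f t) x = v) by (apply is_derive_unique; exact H);
    cbv beta in E; rewrite E; clear E end.

Lemma Dpt (fa fb fc fd : R -> R) va vb vc vd x p :
  is_derive fa x va -> is_derive fb x vb -> is_derive fc x vc -> is_derive fd x vd ->
  fa x + p * fb x <> 0 ->
  is_derive (fun t => (fc t + p * fd t) / (fa t + p * fb t)) x
    (((vc + p * vd) * (fa x + p * fb x) - (fc x + p * fd x) * (va + p * vb)) / (fa x + p * fb x)^2).
Proof.
  intros Ha Hb Hc Hd Hl. auto_derive.
  - repeat split; try (eexists; eassumption). exact Hl.
  - der_rw Ha. der_rw Hb. der_rw Hc. der_rw Hd. field. exact Hl.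
Qed.

Lemma Dpp a b c d p : a + p * b <> 0 ->
  is_derive (fun t => (c + t * d) / (a + t * b)) p ((d * (a + p * b) - (c + p * d) * b) / (a + p * b)^2).
Proof. intros Hl. auto_derive. exact Hl. field. exact Hl. Qed.

Lemma DQp a b c d a1 b1 a2 b2 c1 d1 c2 d2 p q : a + p * b <> 0 ->
  is_derive (fun t => QTe a b c d a1 b1 a2 b2 c1 d1 c2 d2 t q) p
   (((((d1 + c2) + 2 * p * d2) * (a + p * b) + (c1 + p * (d1 + c2) + p^2 * d2) * b
       - d * (a1 + p * (b1 + a2) + p^2 * b2) - (c + p * d) * ((b1 + a2) + 2 * p * b2)) * (a + p * b)
     - 3 * ((a * d - b * c) * q + ((c1 + p * (d1 + c2) + p^2 * d2) * (a + p * b)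
            - (c + p * d) * (a1 + p * (b1 + a2) + p^2 * b2))) * b) / (a + p * b)^4).
Proof.
  intros Hl. unfold QTe. auto_derive.
  - intro H0. apply Hl. clear -H0.
    repeat match goal with H : _ * _ = 0 |- _ => apply Rmult_integral in H; destruct H end;
    try assumption; lra.
  - field. exact Hl.
Qed.

Lemma DQq a b c d a1 b1 a2 b2 c1 d1 c2 d2 p q : a + p * b <> 0 ->
  is_derive (fun t => QTe a b c d a1 b1 a2 b2 c1 d1 c2 d2 p t) q ((a * d - b * c) / (a + p * b)^3).
Proof.
  intros Hl. unfold QTe. auto_derive.
  - repeat split; try exact I; intro H0; apply Hl; clear -H0;
    repeat match goal with H : _ * _ = 0 |- _ => apply Rmult_integral in H; destruct H end;
    try assumption; lra.
  - field. exact Hl.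
Qed.

Lemma cont_lin (fa fb : R -> R) va vb x p :
  is_derive fa x va -> is_derive fb x vb -> continuous (fun t => fa t + p * fb t) x.
Proof.
  intros Ha Hb. apply (@ex_derive_continuous R_AbsRing R_NormedModule). auto_derive.
  repeat split; try (eexists; eassumption).
Qed.

Lemma cont_lin2 a b p : continuous (fun t => a + t * b) p.
Proof. apply (@ex_derive_continuous R_AbsRing R_NormedModule). auto_derive. exact I. Qed.

Lemma isdx (H : R -> R -> R) (Hs : smooth2 H) ds x y :
  is_derive (fun t => iter_partial ds H t y) x (iter_partial (true :: ds) H x y).
Proof. destruct (Hs ds x y) as [H1 _]. apply Derive_correct in H1. exact H1. Qed.

Lemma isdy (H : R -> R -> R) (Hs : smooth2 H) ds x y :
  is_derive (fun t => iter_partial ds H x t) y (iter_partial (false :: ds) H x y).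
Proof. destruct (Hs ds x y) as [_ [H1 _]]. apply Derive_correct in H1. exact H1. Qed.

Lemma lam_eq F f x y p q : lam F f x y p q = dx F x y + p * dy F x y.
Proof. unfold lam, Dtot, lift, dx, dy. rewrite !Derive_const. ring. Qed.

Lemma pt_eq F G f : p_tilde F G f = fun x y p q => (dx G x y + p * dy G x y) / (dx F x y + p * dy F x y).
Proof.
  do 4 (apply functional_extensionality; intro).
  unfold p_tilde. change (Dtot f (lift G)) with (lam G f). rewrite !lam_eq. reflexivity.
Qed.

Definition QTat (F G : R -> R -> R) x y p q :=
  QTe (dx F x y) (dy F x y) (dx G x y) (dy G x y) (dx (dx F) x y) (dx (dy F) x y)
      (dy (dx F) x y) (dy (dy F) x y) (dx (dx G) x y) (dx (dy G) x y) (dy (dx G) x y)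
      (dy (dy G) x y) p q.

Lemma qt_eq F G f (HF : smooth2 F) (HG : smooth2 G) x y p q :
  dx F x y + p * dy F x y <> 0 -> q_tilde F G f x y p q = QTat F G x y p q.
Proof.
  intros Hl. unfold q_tilde. rewrite lam_eq. unfold Dtot. rewrite pt_eq. cbv beta.
  rewrite Derive_const.
  pose proof (Dpt (fun t => dx F t y) (fun t => dy F t y) (fun t => dx G t y) (fun t => dy G t y)
     _ _ _ _ x p (isdx F HF [true] x y) (isdx F HF [false] x y) (isdx G HG [true] x y)
     (isdx G HG [false] x y) Hl) as D1.
  cbv beta in D1. der_rw2 D1.
  pose proof (Dpt (fun t => dx F x t) (fun t => dy F x t) (fun t => dx G x t) (fun t => dy G x t)
     _ _ _ _ y p (isdy F HF [true] x y) (isdy F HF [false] x y) (isdy G HG [true] x y)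
     (isdy G HG [false] x y) Hl) as D2.
  cbv beta in D2. der_rw2 D2.
  pose proof (Dpp (dx F x y) (dy F x y) (dx G x y) (dy G x y) p Hl) as D3.
  der_rw2 D3.
  cbn [iter_partial]. unfold QTat, QTe. field. exact Hl.
Qed.

Definition zat (c : coeffs) (F G : R -> R -> R) (x y : R) : pt :=
  MkPt (dx F x y) (dy F x y) (dx G x y) (dy G x y)
   (dx (dx F) x y) (dx (dy F) x y) (dy (dx F) x y) (dy (dy F) x y)
   (dx (dx G) x y) (dx (dy G) x y) (dy (dx G) x y) (dy (dy G) x y)
   (dx (dx (dx F)) x y) (dy (dx (dx F)) x y) (dx (dx (dy F)) x y) (dy (dx (dy F)) x y)
   (dx (dy (dx F)) x y) (dy (dy (dx F)) x y) (dx (dy (dy F)) x y) (dy (dy (dy F)) x y)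
   (dx (dx (dx G)) x y) (dy (dx (dx G)) x y) (dx (dx (dy G)) x y) (dy (dx (dy G)) x y)
   (dx (dy (dx G)) x y) (dy (dy (dx G)) x y) (dx (dy (dy G)) x y) (dy (dy (dy G)) x y)
   (cX c x y) (cY c x y) (cP c x y) (cQ c x y) (cR c x y) (cS c x y) (cL c x y)
   (cK c x y) (cM c x y) (cN c x y) (cT c x y).

Lemma rtilde_eq c F G (HF : smooth2 F) (HG : smooth2 G) x y p q :
  dx F x y + p * dy F x y <> 0 ->
  r_tilde F G (class_rhs c) x y p q =
  ((((Jx (zat c F G x y) + p * Jy (zat c F G x y)) * q + Psi (zat c F G x y) p
      + q * dPhi (zat c F G x y) p) * lamp (zat c F G x y) p
     - 3 * (Jc (zat c F G x y) * q + Phi (zat c F G x y) p)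
         * (lam2 (zat c F G x y) p + q * Fy (zat c F G x y))) / lamp (zat c F G x y) p ^ 4
    + class_rhs c x y p q * Jc (zat c F G x y) / lamp (zat c F G x y) p ^ 3) / lamp (zat c F G x y) p.
Proof.
  intros Hl. unfold r_tilde. rewrite lam_eq. unfold Dtot.
  set (f := class_rhs c).
  assert (E1 : Derive (fun t => q_tilde F G f t y p q) x = Derive (fun t => QTat F G t y p q) x).
  { apply Derive_ext_loc.
    pose proof (loc_nz _ x (cont_lin (fun t => dx F t y) (fun t => dy F t y) _ _ x p
       (isdx F HF [true] x y) (isdx F HF [false] x y)) Hl) as HL.
    eapply filter_imp; [ | exact HL]. intros t Ht. cbv beta in Ht. apply qt_eq; assumption. }
  assert (E2 : Derive (fun t => q_tilde F G f x t p q) y = Derive (fun t => QTat F G x t p q) y).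
  { apply Derive_ext_loc.
    pose proof (loc_nz _ y (cont_lin (fun t => dx F x t) (fun t => dy F x t) _ _ y p
       (isdy F HF [true] x y) (isdy F HF [false] x y)) Hl) as HL.
    eapply filter_imp; [ | exact HL]. intros t Ht. cbv beta in Ht. apply qt_eq; assumption. }
  assert (E3 : Derive (fun t => q_tilde F G f x y t q) p = Derive (fun t => QTat F G x y t q) p).
  { apply Derive_ext_loc.
    pose proof (loc_nz _ p (cont_lin2 (dx F x y) (dy F x y) p) Hl) as HL.
    eapply filter_imp; [ | exact HL]. intros t Ht. cbv beta in Ht. apply qt_eq; assumption. }
  assert (E4 : Derive (fun t => q_tilde F G f x y p t) q = Derive (fun t => QTat F G x y p t) q).
  { apply Derive_ext. intros t. apply qt_eq; assumption. }
  rewrite E1, E2, E3, E4. unfold QTat.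
  pose proof (Dlem (fun t => dx F t y) (fun t => dy F t y) (fun t => dx G t y) (fun t => dy G t y)
    (fun t => dx (dx F) t y) (fun t => dx (dy F) t y) (fun t => dy (dx F) t y) (fun t => dy (dy F) t y)
    (fun t => dx (dx G) t y) (fun t => dx (dy G) t y) (fun t => dy (dx G) t y) (fun t => dy (dy G) t y)
    _ _ _ _ _ _ _ _ _ _ _ _ x p q
    (isdx F HF [true] x y) (isdx F HF [false] x y) (isdx G HG [true] x y) (isdx G HG [false] x y)
    (isdx F HF [true;true] x y) (isdx F HF [true;false] x y) (isdx F HF [false;true] x y) (isdx F HF [false;false] x y)
    (isdx G HG [true;true] x y) (isdx G HG [true;false] x y) (isdx G HG [false;true] x y) (isdx G HG [false;false] x y)
    Hl) as D1.
  cbv beta zeta in D1. der_rw2 D1.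
  pose proof (Dlem (fun t => dx F x t) (fun t => dy F x t) (fun t => dx G x t) (fun t => dy G x t)
    (fun t => dx (dx F) x t) (fun t => dx (dy F) x t) (fun t => dy (dx F) x t) (fun t => dy (dy F) x t)
    (fun t => dx (dx G) x t) (fun t => dx (dy G) x t) (fun t => dy (dx G) x t) (fun t => dy (dy G) x t)
    _ _ _ _ _ _ _ _ _ _ _ _ y p q
    (isdy F HF [true] x y) (isdy F HF [false] x y) (isdy G HG [true] x y) (isdy G HG [false] x y)
    (isdy F HF [true;true] x y) (isdy F HF [true;false] x y) (isdy F HF [false;true] x y) (isdy F HF [false;false] x y)
    (isdy G HG [true;true] x y) (isdy G HG [true;false] x y) (isdy G HG [false;true] x y) (isdy G HG [false;false] x y)
    Hl) as D2.
  cbv beta zeta in D2. der_rw2 D2.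
  pose proof (DQp (dx F x y) (dy F x y) (dx G x y) (dy G x y) (dx (dx F) x y) (dx (dy F) x y)
      (dy (dx F) x y) (dy (dy F) x y) (dx (dx G) x y) (dx (dy G) x y) (dy (dx G) x y)
      (dy (dy G) x y) p q Hl) as D3.
  der_rw2 D3.
  pose proof (DQq (dx F x y) (dy F x y) (dx G x y) (dy G x y) (dx (dx F) x y) (dx (dy F) x y)
      (dy (dx F) x y) (dy (dy F) x y) (dx (dx G) x y) (dx (dy G) x y) (dy (dx G) x y)
      (dy (dy G) x y) p q Hl) as D4.
  der_rw2 D4.
  cbn [iter_partial].
  unfold Jx, Jy, Psi, Phix, Phiy, dPhi, Jc, Phi, lam2, mu2, mup, lamp, zat.
  cbn [Fx Fy Gx Gy Fxx Fxy Fyx Fyy Gxx Gxy Gyx Gyy Fxxx Fyxx Fxxy Fyxy Fxyx Fyyx Fxyy Fyyy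
       Gxxx Gyxx Gxxy Gyxy Gxyx Gyyx Gxyy Gyyy].
  field. exact Hl.
Qed.

Definition pre (F G : R -> R -> R) (u v : R) : R * R :=
  epsilon (inhabits (0, 0)) (fun w : R * R => F (fst w) (snd w) = u /\ G (fst w) (snd w) = v).

Lemma pre_spec F G x y :
  (forall x1 y1 x2 y2, F x1 y1 = F x2 y2 -> G x1 y1 = G x2 y2 -> x1 = x2 /\ y1 = y2) ->
  pre F G (F x y) (G x y) = (x, y).
Proof.
  intros Hi. unfold pre.
  set (P := fun w : R * R => F (fst w) (snd w) = F x y /\ G (fst w) (snd w) = G x y).
  assert (Hex : exists w, P w) by (exists (x, y); split; reflexivity).
  pose proof (epsilon_spec (inhabits (0, 0)) P Hex) as Hs. revert Hs.
  generalize (epsilon (inhabits (0, 0)) P). intros [x' y'] [H1 H2]. simpl in H1, H2.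
  destruct (Hi _ _ _ _ H1 H2). subst. reflexivity.
Qed.

Definition znew c F G u v := zat c F G (fst (pre F G u v)) (snd (pre F G u v)).

Definition cnew c F G : coeffs :=
  Coeffs (fun u v => Xt (znew c F G u v)) (fun u v => Yt (znew c F G u v))
         (fun u v => Pt (znew c F G u v)) (fun u v => Qt (znew c F G u v))
         (fun u v => Rt (znew c F G u v)) (fun u v => ic5 (hs (znew c F G u v)))
         (fun u v => ic4 (hs (znew c F G u v))) (fun u v => ic3 (hs (znew c F G u v)))
         (fun u v => ic2 (hs (znew c F G u v))) (fun u v => ic1 (hs (znew c F G u v)))
         (fun u v => ic0 (hs (znew c F G u v))).

Lemma rhs_eq c F G x y p q : class_rhs c x y p q = num (zat c F G x y) p q / den (zat c F G x y) p.
Proof.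
  unfold class_rhs, class_num, class_den, num, den, quint, zat. cbn [zX zY zP zQ zR zS zL zK zM zN zT].
  f_equal. ring.
Qed.

Theorem theorem1 :
  forall (c : coeffs) (F G : R -> R -> R),
    point_transformation F G ->
    exists c' : coeffs,
      forall x y p q : R,
        lam F (class_rhs c) x y p q <> 0 ->
        class_den c x y p <> 0 ->
        class_den c' (F x y) (G x y) (p_tilde F G (class_rhs c) x y p q) <> 0 /\
        r_tilde F G (class_rhs c) x y p q =
          class_rhs c' (F x y) (G x y)
            (p_tilde F G (class_rhs c) x y p q)
            (q_tilde F G (class_rhs c) x y p q).
Proof.
  intros c F G [HF [HG [HJ Hi]]].
  exists (cnew c F G).
  intros x y p q Hlam Hden.
  rewrite lam_eq in Hlam.
  rewrite (qt_eq F G (class_rhs c) HF HG x y p q Hlam).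
  rewrite (rtilde_eq c F G HF HG x y p q Hlam).
  rewrite (rhs_eq c F G x y p q).
  rewrite pt_eq. cbv beta.
  unfold class_rhs. unfold class_den, class_num, cnew. cbn [cX cY cP cQ cR cS cL cK cM cN cT].
  unfold znew. rewrite (pre_spec F G x y Hi). cbn [fst snd].
  assert (HJz : Jc (zat c F G x y) <> 0) by exact (HJ x y).
  pose proof (core (zat c F G x y) p q HJz Hlam Hden) as C.
  cbv zeta in C. destruct C as [C1 C2].
  split.
  - exact C1.
  - exact C2.
Qed.
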